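(* Let $X$ be a finite-dimensional real Hilbert space and $A,B$ nonempty closed convex subsets of $X$ with $\operatorname{ri}A\cap\operatorname{ri}B\neq\varnothing$. Let $T=P_BR_A+\mathrm{Id}-P_A$. Then $T$ is boundedly linearly regular: for every $\rho>0$ there exists $\kappa\ge0$ such that $d_{\operatorname{Fix}T}(x)\le\kappa\|x-Tx\|$ for all $x\in X$ with $\|x\|\le\rho$.
   Context: $P_C$ denotes the metric projection onto a closed convex set $C$, $R_C=2P_C-\mathrm{Id}$ the reflector, $d_C$ the distance to $C$, $\operatorname{ri}$ the relative interior, and $\operatorname{Fix}T$ the fixed point set of $T$. *)

(* Defs.v *)
(* The finite-dimensional real Hilbert space X is
   modelled (up to isometric isomorphism) as R^n with the Euclidean inner product. *)
From Stdlib Require Import Reals ClassicalEpsilon.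
From mathcomp Require Import all_boot.
Set Implicit Arguments. Unset Strict Implicit. Unset Printing Implicit Defensive.
Open Scope R_scope.

Definition vec (n : nat) := 'I_n -> R.

Definition vadd n (x y : vec n) : vec n := fun i => x i + y i.
Definition vsub n (x y : vec n) : vec n := fun i => x i - y i.
Definition vscale n (t : R) (x : vec n) : vec n := fun i => t * x i.
Definition vzero n : vec n := fun _ => 0.

Definition inner n (x y : vec n) : R := \big[Rplus/0]_(i < n) (x i * y i).
Definition vnorm n (x : vec n) : R := sqrt (inner x x).

Definition closedS n (C : vec n -> Prop) : Prop :=
  forall x, (forall eps, 0 < eps -> exists y, C y /\ vnorm (vsub x y) < eps) -> C x.

Definition convexS n (C : vec n -> Prop) : Prop :=
  forall x y t, C x -> C y -> 0 <= t <= 1 ->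
    C (vadd (vscale t x) (vscale (1 - t) y)).

Definition affine_set n (S : vec n -> Prop) : Prop :=
  forall x y t, S x -> S y -> S (vadd (vscale t x) (vscale (1 - t) y)).

Definition aff n (C : vec n -> Prop) : vec n -> Prop :=
  fun y => forall S, affine_set S -> (forall z, C z -> S z) -> S y.

Definition ri n (C : vec n -> Prop) : vec n -> Prop :=
  fun x => C x /\ exists eps, 0 < eps /\
    forall y, aff C y -> vnorm (vsub y x) < eps -> C y.

Lemma vec_inhabited n : inhabited (vec n).
Proof. exact (inhabits (@vzero n)). Qed.

Lemma R_inhabited : inhabited R.
Proof. exact (inhabits 0). Qed.

(* metric projection: a nearest point of C (unique for nonempty closed convexS C) *)
Definition is_proj n (C : vec n -> Prop) (x p : vec n) : Prop :=
  C p /\ forall y, C y -> vnorm (vsub x p) <= vnorm (vsub x y).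

Definition proj n (C : vec n -> Prop) (x : vec n) : vec n :=
  epsilon (vec_inhabited n) (fun p => is_proj C x p).

Definition refl n (C : vec n -> Prop) (x : vec n) : vec n :=
  vsub (vscale 2 (proj C x)) x.

Definition dist_to n (C : vec n -> Prop) (x : vec n) : R :=
  epsilon R_inhabited (fun r =>
    (forall y, C y -> r <= vnorm (vsub x y)) /\
    (forall r', (forall y, C y -> r' <= vnorm (vsub x y)) -> r' <= r)).

Definition Fix n (T : vec n -> vec n) : vec n -> Prop := fun x => T x = x.

Definition DR n (A B : vec n -> Prop) (x : vec n) : vec n :=
  vsub (vadd (proj B (refl A x)) x) (proj A x).

(* Main.v *)
Require Import Defs.
From HB Require Import structures.
From Stdlib Require Import Reals Lra Psatz ClassicalEpsilon FunctionalExtensionality Classical.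
From mathcomp Require Import all_boot.
Open Scope R_scope.

Lemma RplusA' : associative Rplus.
Proof. move=> x y z; ring. Qed.
Lemma RplusC' : commutative Rplus.
Proof. move=> x y; ring. Qed.
Lemma Rplus0' : left_id 0 Rplus.
Proof. move=> x; ring. Qed.
HB.instance Definition _ := Monoid.isComLaw.Build R 0 Rplus RplusA' RplusC' Rplus0'.

Section Sums.
Variables (I : Type) (r : seq I) (P : pred I).

Lemma sumD (F G : I -> R) :
  \big[Rplus/0]_(i <- r | P i) F i + \big[Rplus/0]_(i <- r | P i) G i
  = \big[Rplus/0]_(i <- r | P i) (F i + G i).
Proof. by rewrite big_split. Qed.

Lemma sumZ (c : R) (F : I -> R) :
  c * \big[Rplus/0]_(i <- r | P i) F i = \big[Rplus/0]_(i <- r | P i) (c * F i).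
Proof.
elim: r => [|a s IH]; rewrite ?big_nil ?big_cons; first ring.
case: (P a); rewrite -IH; ring.
Qed.

Lemma sumZr (c : R) (F : I -> R) :
  \big[Rplus/0]_(i <- r | P i) F i * c = \big[Rplus/0]_(i <- r | P i) (F i * c).
Proof. rewrite Rmult_comm sumZ; apply: eq_bigr => i _; ring. Qed.

Lemma sumN (F : I -> R) :
  Ropp (\big[Rplus/0]_(i <- r | P i) F i) = \big[Rplus/0]_(i <- r | P i) (- F i).
Proof.
set S := \big[Rplus/0]_(i <- r | P i) F i.
have -> : - S = -1 * S by ring.
by rewrite /S sumZ; apply: eq_bigr => i _; ring.
Qed.

Lemma sumB (F G : I -> R) :
  \big[Rplus/0]_(i <- r | P i) F i - \big[Rplus/0]_(i <- r | P i) G i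
  = \big[Rplus/0]_(i <- r | P i) (F i - G i).
Proof. by rewrite /Rminus sumN sumD. Qed.

Lemma sum_ge0 (F : I -> R) : (forall i, P i -> 0 <= F i) ->
  0 <= \big[Rplus/0]_(i <- r | P i) F i.
Proof.
move=> H; elim: r => [|a s IH]; rewrite ?big_nil ?big_cons; first lra.
case E: (P a) => //; have := H a E; lra.
Qed.

Lemma sum_le (F G : I -> R) : (forall i, P i -> F i <= G i) ->
  \big[Rplus/0]_(i <- r | P i) F i <= \big[Rplus/0]_(i <- r | P i) G i.
Proof.
move=> H; elim: r => [|a s IH]; rewrite ?big_nil ?big_cons; first lra.
case E: (P a) => //; have := H a E; lra.
Qed.
End Sums.

Lemma sum_const n (c : R) : \big[Rplus/0]_(i < n) c = INR n * c.
Proof.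
elim: n => [|n IH]; first by rewrite big_ord0 Rmult_0_l.
rewrite (big_ord_recr n (fun _ => c)) IH S_INR /=; ring.
Qed.

Lemma sum_delta n (j : 'I_n) (F : 'I_n -> R) :
  \big[Rplus/0]_(i < n) (if i == j then F i else 0) = F j.
Proof.
rewrite (bigD1 j) //= eqxx big1; first ring.
by move=> i /negbTE ->.
Qed.

Lemma sum_term_le n (j : 'I_n) (F : 'I_n -> R) : (forall i, 0 <= F i) ->
  F j <= \big[Rplus/0]_(i < n) F i.
Proof.
move=> H; rewrite (bigD1 j) //=.
rewrite -[X in X <= _]Rplus_0_r; apply: Rplus_le_compat_l; apply: sum_ge0 => i _; exact: H.
Qed.


Ltac vext := apply: functional_extensionality => ?; rewrite /vadd /vsub /vscale /vzero /=; first [ring | field].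
Ltac inner_id := rewrite /inner; rewrite ?(sumZ, sumZr, sumD, sumB, sumN);
  apply: eq_bigr => ? _; rewrite /vadd /vsub /vscale /vzero /=; first [ring | field].


Section V.
Context {n : nat}.
Implicit Types x y w : vec n.

Lemma inner_sym x y : inner x y = inner y x.
Proof. rewrite /inner; apply: eq_bigr => i _; ring. Qed.
Lemma inner_addl x y w : inner (vadd x y) w = inner x w + inner y w.
Proof. rewrite /inner sumD; apply: eq_bigr => i _; rewrite /vadd; ring. Qed.
Lemma inner_addr x y w : inner w (vadd x y) = inner w x + inner w y.
Proof. rewrite /inner sumD; apply: eq_bigr => i _; rewrite /vadd; ring. Qed.
Lemma inner_subl x y w : inner (vsub x y) w = inner x w - inner y w.
Proof. rewrite /inner sumB; apply: eq_bigr => i _; rewrite /vsub; ring. Qed.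
Lemma inner_subr x y w : inner w (vsub x y) = inner w x - inner w y.
Proof. rewrite /inner sumB; apply: eq_bigr => i _; rewrite /vsub; ring. Qed.
Lemma inner_scalel c x w : inner (vscale c x) w = c * inner x w.
Proof. rewrite /inner sumZ; apply: eq_bigr => i _; rewrite /vscale; ring. Qed.
Lemma inner_scaler c x w : inner w (vscale c x) = c * inner w x.
Proof. rewrite /inner sumZ; apply: eq_bigr => i _; rewrite /vscale; ring. Qed.
Lemma inner_zerol w : inner (@vzero n) w = 0.
Proof. rewrite /inner big1 // => i _; rewrite /vzero; ring. Qed.
Lemma inner_zeror w : inner w (@vzero n) = 0.
Proof. rewrite /inner big1 // => i _; rewrite /vzero; ring. Qed.

Definition innerE := (inner_addl, inner_addr, inner_subl, inner_subr, inner_scalel,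
  inner_scaler, inner_zerol, inner_zeror).

Lemma inner_ge0 x : 0 <= inner x x.
Proof. apply: sum_ge0 => i _; nra. Qed.

Lemma inner_coord_le x i : x i * x i <= inner x x.
Proof. apply: (@sum_term_le n i (fun j => x j * x j)) => j; nra. Qed.

Lemma inner_eq0 x : inner x x = 0 -> x = @vzero n.
Proof.
move=> H; apply: functional_extensionality => i; rewrite /vzero.
have := inner_coord_le x i; nra.
Qed.

Lemma vnorm_ge0 x : 0 <= vnorm x.
Proof. exact: sqrt_pos. Qed.
Lemma vnorm_sq x : vnorm x * vnorm x = inner x x.
Proof. exact: sqrt_sqrt (inner_ge0 x). Qed.

Lemma vnorm_le_sq x y : inner x x <= inner y y -> vnorm x <= vnorm y.
Proof. move=> H; have := vnorm_sq x; have := vnorm_sq y; have := vnorm_ge0 x; have := vnorm_ge0 y; nra. Qed.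
Lemma vnorm_lt_sq x y : inner x x < inner y y -> vnorm x < vnorm y.
Proof. move=> H; have := vnorm_sq x; have := vnorm_sq y; have := vnorm_ge0 x; have := vnorm_ge0 y; nra. Qed.
Lemma sq_le_vnorm x y : vnorm x <= vnorm y -> inner x x <= inner y y.
Proof. move=> H; rewrite -!vnorm_sq; have := vnorm_ge0 x; nra. Qed.

Lemma cauchy_schwarz x y : inner x y <= vnorm x * vnorm y.
Proof.
have Hx := vnorm_sq x; have Hy := vnorm_sq y; have := vnorm_ge0 x; have := vnorm_ge0 y.
suff H : inner x y * inner x y <= inner x x * inner y y.
  move=> ha hb; rewrite -Hx -Hy in H.
  have hab := Rmult_le_pos _ _ hb ha.
  set p := vnorm x * vnorm y in hab *; set q := inner x y in H *.
  have : q * q <= p * p by rewrite /p; nra.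
  nra.
case: (Req_dec (inner y y) 0) => Hyy.
  rewrite (inner_eq0 y Hyy) !inner_zeror; nra.
have Hyp : 0 < inner y y by have := inner_ge0 y; lra.
set t := inner x y / inner y y.
have := inner_ge0 (vsub x (vscale t y)).
rewrite !innerE (inner_sym y x).
have -> : inner x y = t * inner y y by rewrite /t; field; lra.
nra.
Qed.

Lemma cauchy_schwarz_abs x y : Rabs (inner x y) <= vnorm x * vnorm y.
Proof.
case: (Rcase_abs (inner x y)) => H.
  rewrite Rabs_left //; have := cauchy_schwarz (vscale (-1) x) y.
  rewrite inner_scalel; have -> : vnorm (vscale (-1) x) = vnorm x; last lra.
  rewrite /vnorm inner_scalel inner_scaler; f_equal; ring.
rewrite Rabs_right //; exact: cauchy_schwarz.
Qed.

Lemma vnorm_scale c x : vnorm (vscale c x) = Rabs c * vnorm x.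
Proof.
rewrite /vnorm inner_scalel inner_scaler -Rmult_assoc sqrt_mult_alt.
  by rewrite -Rsqr_def sqrt_Rsqr_abs.
nra.
Qed.

Lemma vnorm_add x y : vnorm (vadd x y) <= vnorm x + vnorm y.
Proof.
have := cauchy_schwarz x y; have := vnorm_ge0 x; have := vnorm_ge0 y.
have := vnorm_sq x; have := vnorm_sq y; have := vnorm_sq (vadd x y); have := vnorm_ge0 (vadd x y).
rewrite !innerE (inner_sym y x); nra.
Qed.

Lemma vnorm_sub x y : vnorm (vsub x y) <= vnorm x + vnorm y.
Proof.
have -> : vsub x y = vadd x (vscale (-1) y) by vext.
apply: Rle_trans (vnorm_add _ _) _; rewrite vnorm_scale Rabs_Ropp Rabs_R1; lra.
Qed.

Lemma vnorm_sym x y : vnorm (vsub x y) = vnorm (vsub y x).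
Proof. rewrite /vnorm; f_equal; rewrite !innerE; ring. Qed.

Lemma vnorm_zero : vnorm (@vzero n) = 0.
Proof. by rewrite /vnorm inner_zerol sqrt_0. Qed.

Lemma vnorm_eq0 x : vnorm x = 0 -> x = @vzero n.
Proof. move=> H; apply: inner_eq0; rewrite -vnorm_sq H; ring. Qed.

Lemma vnorm_coord x i : Rabs (x i) <= vnorm x.
Proof.
have := inner_coord_le x i; have := vnorm_sq x; have := vnorm_ge0 x.
case: (Rcase_abs (x i)) => H; [rewrite Rabs_left // | rewrite Rabs_right //]; nra.
Qed.
End V.

Lemma vnorm_le_r {n} (x : vec n) r : 0 <= r -> inner x x <= r * r -> vnorm x <= r.
Proof. move=> Hr H; have := vnorm_sq x; have := vnorm_ge0 x; nra. Qed.
Lemma vnorm_lt_r {n} (x : vec n) r : 0 <= r -> inner x x < r * r -> vnorm x < r.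
Proof. move=> Hr H; have := vnorm_sq x; have := vnorm_ge0 x; nra. Qed.



Section Proj.
Context {n : nat}.
Implicit Types (x y p q : vec n) (C : vec n -> Prop).

Lemma proj_var C x p : convexS C -> is_proj C x p ->
  forall y, C y -> inner (vsub x p) (vsub y p) <= 0.
Proof.
move=> Hcv [Cp Hp] y Cy.
have key : forall t, 0 < t <= 1 ->
    2 * inner (vsub x p) (vsub y p) <= t * inner (vsub y p) (vsub y p).
  move=> t Ht.
  have Cq := Hcv _ _ t Cy Cp (conj (Rlt_le _ _ (proj1 Ht)) (proj2 Ht)).
  have := sq_le_vnorm _ _ (Hp _ Cq).
  have -> : vsub x (vadd (vscale t y) (vscale (1 - t) p)) =
            vsub (vsub x p) (vscale t (vsub y p)) by vext.
  have -> : inner (vsub (vsub x p) (vscale t (vsub y p))) (vsub (vsub x p) (vscale t (vsub y p)))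
    = inner (vsub x p) (vsub x p) - 2 * t * inner (vsub x p) (vsub y p)
      + t * t * inner (vsub y p) (vsub y p) by inner_id.
  move=> H.
  have : 0 <= t * (t * inner (vsub y p) (vsub y p) - 2 * inner (vsub x p) (vsub y p)) by nra.
  move=> H2; have := Rmult_le_0_lt_compat; nra.
set g := inner (vsub x p) (vsub y p); set h := inner (vsub y p) (vsub y p).
have hh : 0 <= h := inner_ge0 _.
apply: Rnot_lt_le => Hg.
have Hh : 0 < h by have := key 1 (conj Rlt_0_1 (Rle_refl 1)); rewrite -/g -/h; lra.
set t := Rmin 1 (g / h).
have Ht1 : t <= 1 := Rmin_l _ _.
have Ht2 : t <= g / h := Rmin_r _ _.
have Ht0 : 0 < t by apply: Rmin_glb_lt; [lra | apply: Rdiv_lt_0_compat].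
have := key t (conj Ht0 Ht1); rewrite -/g -/h.
have : t * h <= g by move: Ht2; rewrite /Rdiv => Ht2; have := Rmult_le_compat_r h _ _ hh Ht2;
  rewrite Rmult_assoc Rinv_l; lra.
lra.
Qed.

Lemma var_proj C x p : C p -> (forall y, C y -> inner (vsub x p) (vsub y p) <= 0) ->
  is_proj C x p.
Proof.
move=> Cp H; split => // y Cy; apply: vnorm_le_sq.
have -> : inner (vsub x y) (vsub x y) = inner (vsub x p) (vsub x p)
   - 2 * inner (vsub x p) (vsub y p) + inner (vsub y p) (vsub y p) by inner_id.
have := H y Cy; have := inner_ge0 (vsub y p); lra.
Qed.

Lemma proj_unique C x p q : convexS C -> is_proj C x p -> is_proj C x q -> p = q.
Proof.
move=> Hcv Hp Hq.
have h1 := @proj_var _ _ _ Hcv Hp _ (proj1 Hq).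
have h2 := @proj_var _ _ _ Hcv Hq _ (proj1 Hp).
have E : inner (vsub p q) (vsub p q) = 0.
  have : inner (vsub p q) (vsub p q) =
    (inner (vsub x p) (vsub q p) + inner (vsub x q) (vsub p q)) by inner_id.
  have := inner_ge0 (vsub p q); lra.
have := inner_eq0 _ E => Hz.
apply: functional_extensionality => i.
have := f_equal (fun f => f i) Hz; rewrite /vsub /vzero /=; lra.
Qed.

Lemma proj_eq C x p : convexS C -> is_proj C x p -> proj C x = p.
Proof.
move=> Hcv Hp; apply: (@proj_unique _ _ _ _ Hcv _ Hp).
rewrite /proj; apply: epsilon_spec; by exists p.
Qed.

Lemma proj_le C x p y : is_proj C x p -> convexS C -> C y ->
  vnorm (vsub p y) <= vnorm (vsub x y).
Proof.
move=> Hp Hcv Cy; have H := @proj_var _ _ _ Hcv Hp _ Cy; apply: vnorm_le_sq.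
have -> : inner (vsub x y) (vsub x y) = inner (vsub x p) (vsub x p)
   - 2 * inner (vsub x p) (vsub y p) + inner (vsub p y) (vsub p y) by inner_id.
have := inner_ge0 (vsub x p); lra.
Qed.

Lemma dist_le (F : vec n -> Prop) x f : F f -> dist_to F x <= vnorm (vsub x f).
Proof.
move=> Ff.
pose E := fun r => forall y, F y -> r <= vnorm (vsub x y).
have bE : bound E by exists (vnorm (vsub x f)) => r Er; exact: Er.
have neE : exists r, E r by exists 0 => y _; exact: vnorm_ge0.
have [m [Hub Hl]] := completeness E bE neE.
have ex : exists r, (forall y, F y -> r <= vnorm (vsub x y)) /\
    (forall r', (forall y, F y -> r' <= vnorm (vsub x y)) -> r' <= r).
  exists m; split.
    move=> y Fy; apply: Hl => r Er; exact: Er.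
  move=> r' Hr'; exact: Hub.
have := epsilon_spec R_inhabited _ ex.
rewrite -/(dist_to F x) => [[H _]]; exact: H.
Qed.
End Proj.



Definition hh (k : nat) : R := / (INR k + 1).

Lemma hh_pos k : 0 < hh k.
Proof. rewrite /hh; apply: Rinv_0_lt_compat; have := pos_INR k; lra. Qed.

Lemma hh_mono k m : (k <= m)%coq_nat -> hh m <= hh k.
Proof.
move=> H; rewrite /hh; apply: Rinv_le_contravar; first by have := pos_INR k; lra.
have := le_INR _ _ H; lra.
Qed.

Lemma hh_small eps : 0 < eps -> exists N, forall k, (N <= k)%coq_nat -> hh k < eps.
Proof.
move=> He; have [N HN] := INR_archimed eps 1 He.
exists N => k Hk; apply: (Rle_lt_trans _ _ _ (hh_mono _ _ Hk)).
rewrite /hh; have HN0 : 0 < INR N + 1 by have := pos_INR N; lra.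
apply: (Rmult_lt_reg_l (INR N + 1)) => //; rewrite Rinv_r; nra.
Qed.

Section Exist.
Context {n : nat}.
Implicit Types (x y p q : vec n) (C : vec n -> Prop).

Lemma proj_exists C x : closedS C -> convexS C -> (exists c, C c) -> exists p, is_proj C x p.
Proof.
move=> Hcl Hcv [c0 Cc0].
pose E := fun r => exists y, C y /\ r = - inner (vsub x y) (vsub x y).
have bE : bound E by exists 0 => r [y [_ ->]]; have := inner_ge0 (vsub x y); lra.
have neE : exists r, E r by exists (- inner (vsub x c0) (vsub x c0)), c0.
have [m [Hub Hl]] := completeness E bE neE.
set D2 := - m.
have low : forall y, C y -> D2 <= inner (vsub x y) (vsub x y).
  move=> y Cy; have := Hub _ (ex_intro _ y (conj Cy erefl)); rewrite /D2; lra.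
have D2pos : 0 <= D2.
  have : m <= 0 by apply: Hl => r [y [_ ->]]; have := inner_ge0 (vsub x y); lra.
  rewrite /D2; lra.
have near : forall eta, 0 < eta -> exists y, C y /\ inner (vsub x y) (vsub x y) < D2 + eta.
  move=> eta He; apply: NNPP => Hn.
  have : m <= m - eta; last lra.
  apply: Hl => r [y [Cy ->]]; apply: Rnot_lt_le => Hlt; apply: Hn; exists y; split => //.
  rewrite /D2; lra.
have ysig : forall k, {y | C y /\ inner (vsub x y) (vsub x y) < D2 + hh k * hh k}.
  move=> k; apply: constructive_indefinite_description; apply: near.
  have := hh_pos k; nra.
pose ys k := proj1_sig (ysig k).
have ysC : forall k, C (ys k) by move=> k; exact: (proj1 (proj2_sig (ysig k))).
have ysD : forall k, inner (vsub x (ys k)) (vsub x (ys k)) < D2 + hh k * hh k.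
  by move=> k; exact: (proj2 (proj2_sig (ysig k))).
have cauchy : forall k m, vnorm (vsub (ys k) (ys m)) <= 2 * hh k + 2 * hh m.
  move=> k l.
  have Cmid := Hcv _ _ (1/2) (ysC k) (ysC l) (conj (ltac:(lra) : 0 <= 1/2) (ltac:(lra) : 1/2 <= 1)).
  have Hmid := low _ Cmid.
  have E1 : inner (vsub (ys k) (ys l)) (vsub (ys k) (ys l)) =
    2 * inner (vsub x (ys k)) (vsub x (ys k)) + 2 * inner (vsub x (ys l)) (vsub x (ys l))
    - 4 * inner (vsub x (vadd (vscale (1/2) (ys k)) (vscale (1 - 1/2) (ys l))))
                (vsub x (vadd (vscale (1/2) (ys k)) (vscale (1 - 1/2) (ys l)))) by inner_id.
  have := ysD k; have := ysD l; have := hh_pos k; have := hh_pos l.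
  have := vnorm_sq (vsub (ys k) (ys l)); have := vnorm_ge0 (vsub (ys k) (ys l)).
  rewrite E1; nra.
have coordC : forall k m i, Rabs (ys k i - ys m i) <= 2 * hh k + 2 * hh m.
  move=> k l i; apply: Rle_trans (cauchy k l); exact: (vnorm_coord (vsub (ys k) (ys l)) i).
have crit : forall i, Cauchy_crit (fun k => ys k i).
  move=> i eps He; have [N HN] := hh_small (eps / 4) ltac:(lra).
  exists N => k l Hk Hl'; rewrite /R_dist.
  have := coordC k l i; have := HN k Hk; have := HN l Hl'; lra.
pose yl i := proj1_sig (R_complete _ (crit i)).
have ylcv : forall i, Un_cv (fun k => ys k i) (yl i) by move=> i; exact: proj2_sig (R_complete _ (crit i)).
have coordL : forall k i, Rabs (yl i - ys k i) <= 2 * hh k.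
  move=> k i; apply: Rnot_lt_le => Hlt.
  set g := Rabs (yl i - ys k i) - 2 * hh k.
  have Hg : 0 < g by rewrite /g; lra.
  have [N1 HN1] := ylcv i (g / 2) ltac:(lra).
  have [N2 HN2] := hh_small (g / 4) ltac:(lra).
  pose l := Nat.max N1 N2.
  have h1 := HN1 l (Nat.le_max_l N1 N2); rewrite /R_dist in h1.
  have h2 := HN2 l (Nat.le_max_r N1 N2).
  have h3 := coordC l k i.
  have h4 := Rabs_triang (yl i - ys l i) (ys l i - ys k i).
  rewrite (_ : yl i - ys l i + (ys l i - ys k i) = yl i - ys k i) in h4; last by ring.
  have h5 : Rabs (yl i - ys l i) = Rabs (ys l i - yl i) by rewrite -Rabs_Ropp; f_equal; ring.
  have Eg : g = Rabs (yl i - ys k i) - 2 * hh k by []. lra.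
have normL : forall k, vnorm (vsub yl (ys k)) <= (INR n + 1) * (2 * hh k).
  move=> k; have Hb : 0 <= 2 * hh k by have := hh_pos k; lra.
  apply: vnorm_le_r; first by have := pos_INR n; nra.
  apply: (Rle_trans _ (INR n * ((2 * hh k) * (2 * hh k)))).
    rewrite /inner -sum_const; apply: sum_le => i _; rewrite /vsub.
    have := coordL k i; have := Rabs_pos (yl i - ys k i).
    have -> : (yl i - ys k i) * (yl i - ys k i) = Rabs (yl i - ys k i) * Rabs (yl i - ys k i).
      rewrite -Rabs_mult Rabs_pos_eq //; exact: Rle_0_sqr.
    by move=> h1 h2; apply: Rmult_le_compat.
  have := pos_INR n; nra.
have Hn0 : 0 < INR n + 1 by have := pos_INR n; lra.
have ylC : C yl.
  apply: Hcl => eps He.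
  have [N HN] := hh_small (eps / (2 * (INR n + 1))) ltac:(apply: Rdiv_lt_0_compat; lra).
  exists (ys N); split => //.
  have h1 := HN N (le_n N).
  have h2 : (INR n + 1) * (2 * hh N) < eps.
    have := Rmult_lt_compat_l (2 * (INR n + 1)) _ _ ltac:(lra) h1.
    rewrite (_ : 2 * (INR n + 1) * (eps / (2 * (INR n + 1))) = eps); last by field; lra.
    lra.
  have := normL N; lra.
exists yl; split => // y Cy.
apply: Rnot_lt_le => Hlt.
set d := vnorm (vsub x y).
set g := vnorm (vsub x yl) - d.
have Eg : g = vnorm (vsub x yl) - d by [].
have Ed : d = vnorm (vsub x y) by [].
clearbody d g.
have Hg : 0 < g by lra.
have [N HN] := hh_small (g / (2 * INR n + 3)) ltac:(apply: Rdiv_lt_0_compat; lra).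
have h1 := HN N (le_n N).
have hN := hh_pos N.
have h2 : (2 * INR n + 3) * hh N < g.
  have := Rmult_lt_compat_l (2 * INR n + 3) _ _ ltac:(lra) h1.
  rewrite (_ : (2 * INR n + 3) * (g / (2 * INR n + 3)) = g); last by field; lra.
  lra.
have h3 : vnorm (vsub x (ys N)) < d + hh N.
  apply: vnorm_lt_r; first by have := vnorm_ge0 (vsub x y); lra.
  have := ysD N; have := low y Cy; have := vnorm_sq (vsub x y); have := vnorm_ge0 (vsub x y).
  rewrite -Ed; nra.
have h4 : vsub x yl = vadd (vsub x (ys N)) (vsub (ys N) yl) by vext.
have h5 := vnorm_add (vsub x (ys N)) (vsub (ys N) yl).
rewrite -h4 (vnorm_sym (ys N) yl) in h5.
have h6 := normL N.
lra.
Qed.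
End Exist.



Section ONB.
Context {n : nat}.
Implicit Types (x y u s : vec n) (S : vec n -> Prop).

Definition subspace S := S (@vzero n) /\ (forall x y, S x -> S y -> S (vadd x y)) /\
  (forall c x, S x -> S (vscale c x)).

Definition orthonormal k (E : 'I_k -> vec n) :=
  forall i j, inner (E i) (E j) = if i == j then 1 else 0.

Definition lc k (c : 'I_k -> R) (E : 'I_k -> vec n) : vec n :=
  fun l => \big[Rplus/0]_(j < k) (c j * E j l).
Arguments lc {k}.

Definition pE k (E : 'I_k -> vec n) u : vec n := lc (fun j => inner u (E j)) E.
Arguments pE {k}.

Lemma inner_lc k c E y : inner (@lc k c E) y = \big[Rplus/0]_(j < k) (c j * inner (E j) y).
Proof.
rewrite {1}/inner /lc.
under eq_bigr => i _ do rewrite sumZr.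
rewrite exchange_big /=; apply: eq_bigr => j _.
rewrite /inner sumZ; apply: eq_bigr => i _; ring.
Qed.

Lemma inner_E_pE k E u j : @orthonormal k E -> inner (E j) (pE E u) = inner u (E j).
Proof.
move=> HE; rewrite inner_sym inner_lc.
rewrite (eq_bigr (fun i => if i == j then inner u (E i) else 0)); first by rewrite sum_delta.
move=> i _; rewrite HE; case: (i == j); ring.
Qed.

Lemma subspace_lc S k c E : subspace S -> (forall j, S (E j)) -> S (@lc k c E).
Proof.
move=> [S0 [Sadd Ssc]]; elim: k c E => [|k IH] c E HE.
  have -> : lc c E = @vzero n by apply: functional_extensionality => l; rewrite /lc big_ord0.
  exact: S0.
have -> : lc c E = vadd (vscale (c ord0) (E ord0)) (lc (fun j => c (lift ord0 j)) (fun j => E (lift ord0 j))).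
  apply: functional_extensionality => l; rewrite /lc big_ord_recl /=.
  by rewrite /vadd /vscale.
apply: Sadd; [exact: Ssc | exact: IH].
Qed.

Definition delta (i : 'I_n) : vec n := fun l => if l == i then 1 else 0.

Lemma inner_delta i x : inner (delta i) x = x i.
Proof.
rewrite /inner (eq_bigr (fun l => if l == i then x l else 0)); first by rewrite sum_delta.
move=> l _; rewrite /delta; case: (l == i); ring.
Qed.

Lemma bessel k E x : @orthonormal k E ->
  \big[Rplus/0]_(j < k) (inner x (E j) * inner x (E j)) <= inner x x.
Proof.
move=> HE; have H := inner_ge0 (vsub x (pE E x)).
rewrite !innerE in H.
have h1 : inner (pE E x) x = \big[Rplus/0]_(j < k) (inner x (E j) * inner x (E j)).
  rewrite inner_lc; apply: eq_bigr => j _; rewrite inner_sym; ring.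
have h2 : inner x (pE E x) = \big[Rplus/0]_(j < k) (inner x (E j) * inner x (E j)).
  by rewrite inner_sym.
have h3 : inner (pE E x) (pE E x) = \big[Rplus/0]_(j < k) (inner x (E j) * inner x (E j)).
  rewrite {1}/pE inner_lc; apply: eq_bigr => j _; rewrite inner_E_pE //.
rewrite h1 h2 h3 in H; lra.
Qed.

Lemma orthonormal_le k E : @orthonormal k E -> (k <= n)%N.
Proof.
move=> HE; apply/leP; apply: INR_le.
have -> : INR k = \big[Rplus/0]_(j < k) inner (E j) (E j).
  by rewrite (eq_bigr (fun _ => 1)) ?sum_const ?Rmult_1_r // => j _; rewrite HE eqxx.
have -> : INR n = \big[Rplus/0]_(i < n) inner (delta i) (delta i).
  rewrite (eq_bigr (fun _ => 1)) ?sum_const ?Rmult_1_r // => i _.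
  by rewrite inner_delta /delta eqxx.
have -> : \big[Rplus/0]_(j < k) inner (E j) (E j) = \big[Rplus/0]_(i < n) \big[Rplus/0]_(j < k)
   (inner (delta i) (E j) * inner (delta i) (E j)).
  rewrite exchange_big /=; apply: eq_bigr => i _; apply: eq_bigr => j _.
  by rewrite inner_delta.
apply: sum_le => i _; exact: bessel.
Qed.
Lemma onb_exists S : subspace S -> exists k (E : 'I_k -> vec n),
  orthonormal k E /\ (forall j, S (E j)) /\ (forall s, S s -> s = pE E s).
Proof.
move=> HS; have [S0 [Sadd Ssc]] := HS.
pose P k := exists E : 'I_k -> vec n, orthonormal k E /\ forall j, S (E j).
have P0 : P 0%N by exists (fun _ => @vzero n); split; move=> [m Hm].
have [k [[E [HE SE]] Hk]] : exists k, P k /\ ~ P k.+1.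
  apply: NNPP => H.
  have all : forall k, P k.
    elim => // k IH; apply: NNPP => Hk; apply: H; by exists k.
  have [E [HE _]] := all n.+1; have := orthonormal_le _ _ HE; by rewrite ltnn.
exists k, E; do 2 split => //.
move=> s Ss; apply: NNPP => Hne.
pose r := vsub s (pE E s).
have Sr : S r.
  have -> : r = vadd s (vscale (-1) (pE E s)) by rewrite /r; vext.
  apply: Sadd => //; apply: Ssc; exact: subspace_lc.
have rr : 0 < inner r r.
  have := inner_ge0 r; case/Rle_lt_or_eq_dec => // H0.
  exfalso; apply: Hne; have Hz := inner_eq0 _ (esym H0).
  apply: functional_extensionality => l; have := f_equal (fun f => f l) Hz.
  rewrite /r /vsub /vzero /=; lra.
have Er : forall j, inner (E j) r = 0.
  move=> j; rewrite /r inner_subr inner_E_pE // inner_sym; ring.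
have nr := vnorm_sq r; have nr0 := vnorm_ge0 r.
have nrp : 0 < vnorm r by nra.
pose e := vscale (/ vnorm r) r.
have ee : inner e e = 1.
  rewrite /e inner_scalel inner_scaler -nr; field; lra.
have Ee : forall j, inner (E j) e = 0 by move=> j; rewrite /e inner_scaler Er; ring.
pose E' : 'I_k.+1 -> vec n := fun i => if unlift ord0 i is Some j then E j else e.
apply: Hk; exists E'; split.
  move=> i j; rewrite /E'.
  case: (unliftP ord0 i) => [a ->|->]; case: (unliftP ord0 j) => [b ->|->].
  - by rewrite (inj_eq lift_inj) HE.
  - by rewrite eq_sym (negbTE (neq_lift _ _)) Ee.
  - by rewrite (negbTE (neq_lift _ _)) inner_sym Ee.
  - by rewrite eqxx ee.
move=> i; rewrite /E'; case: (unliftP ord0 i) => [a _|_] //.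
exact: Ssc.
Qed.
End ONB.
Arguments lc {n k}. Arguments pE {n k}.



Section Aff.
Context {n : nat}.
Implicit Types (x y z s : vec n) (C : vec n -> Prop).

Lemma aff_affine C : affine_set (aff C).
Proof.
move=> x y t Hx Hy S0 HS HC.
apply: (HS); [exact: Hx S0 HS HC | exact: Hy S0 HS HC].
Qed.

Lemma aff_incl C y : C y -> aff C y.
Proof. by move=> Cy S0 _ HC; apply: HC. Qed.

Lemma dir_subspace C z : C z -> subspace (fun s => aff C (vadd z s)).
Proof.
move=> Cz; have Az := aff_incl _ _ Cz; have Haf := @aff_affine C.
split; [|split].
- by have -> : vadd z (@vzero n) = z by vext.
- move=> s t Hs Ht.
  have Hm := Haf _ _ (1/2) Hs Ht.
  have := Haf _ _ 2 Hm Az.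
  by have -> : vadd (vscale 2 (vadd (vscale (1 / 2) (vadd z s)) (vscale (1 - 1 / 2) (vadd z t))))
      (vscale (1 - 2) z) = vadd z (vadd s t) by vext.
- move=> c s Hs; have := Haf _ _ c Hs Az.
  by have -> : vadd (vscale c (vadd z s)) (vscale (1 - c) z) = vadd z (vscale c s) by vext.
Qed.

Lemma norm_lc k (c : 'I_k -> R) (F : 'I_k -> vec n) :
  vnorm (lc c F) <= \big[Rplus/0]_(j < k) (Rabs (c j) * vnorm (F j)).
Proof.
elim: k c F => [|k IH] c F.
  have -> : lc c F = @vzero n by apply: functional_extensionality => l; rewrite /lc big_ord0.
  by rewrite vnorm_zero big_ord0; lra.
have -> : lc c F = vadd (vscale (c ord0) (F ord0)) (lc (fun j => c (lift ord0 j)) (fun j => F (lift ord0 j))).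
  apply: functional_extensionality => l; rewrite /lc big_ord_recl /=.
  by rewrite /vadd /vscale.
rewrite big_ord_recl /=.
apply: Rle_trans (vnorm_add _ _) _.
rewrite vnorm_scale; have := IH (fun j => c (lift ord0 j)) (fun j => F (lift ord0 j)) => H; exact: Rplus_le_compat_l H.
Qed.

Lemma vnorm_onb k E j : @orthonormal n k E -> vnorm (E j) = 1.
Proof. by move=> HE; rewrite /vnorm HE eqxx sqrt_1. Qed.
End Aff.



Theorem theorem4p5 (n : nat) (A B : vec n -> Prop)
  (hAne : exists a, A a) (hBne : exists b, B b)
  (hAcl : closedS A) (hBcl : closedS B)
  (hAcv : convexS A) (hBcv : convexS B)
  (hri : exists z, ri A z /\ ri B z) :
  forall rho : R, 0 < rho ->
    exists kappa : R, 0 <= kappa /\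
      forall x : vec n, vnorm x <= rho ->
        dist_to (Fix (DR A B)) x <= kappa * vnorm (vsub x (DR A B x)).
Proof.
move=> rho Hrho.
case: hri => z [[Az [eA [heA riA]]] [Bz [eB [heB riB]]]].
set e := Rmin eA eB / 2.
have he : 0 < e by rewrite /e; apply: Rdiv_lt_0_compat; [apply: Rmin_glb_lt|]; lra.
have heA' : e < eA by rewrite /e; have := Rmin_l eA eB; lra.
have heB' : e < eB by rewrite /e; have := Rmin_r eA eB; lra.
clearbody e.
pose U := fun s => aff A (vadd z s).
pose V := fun s => aff B (vadd z s).
have sU : subspace U := dir_subspace _ _ Az.
have sV : subspace V := dir_subspace _ _ Bz.
have [U0 [Uadd Usc]] := sU.
have [V0 [Vadd Vsc]] := sV.
have inU : forall s, U s -> vnorm s <= e -> A (vadd z s).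
  move=> s Us Hs; apply: riA => //.
  have -> : vsub (vadd z s) z = s by vext.
  lra.
have inV : forall s, V s -> vnorm s <= e -> B (vadd z s).
  move=> s Vs Hs; apply: riB => //.
  have -> : vsub (vadd z s) z = s by vext.
  lra.
have AU : forall y, A y -> U (vsub y z).
  move=> y Ay; rewrite /U; have -> : vadd z (vsub y z) = y by vext.
  exact: aff_incl.
have BV : forall y, B y -> V (vsub y z).
  move=> y By; rewrite /V; have -> : vadd z (vsub y z) = y by vext.
  exact: aff_incl.
pose L := fun l => exists p q, U p /\ V q /\ l = vadd p q.
have sL : subspace L.
  rewrite /subspace /L; split; [|split].
  - exists (@vzero n), (@vzero n); split => //; split => //; vext.
  - move=> x y Hx Hy; case: Hx => p1 Hx. case: Hx => q1 Hx. case: Hx => Hp1 Hx. case: Hx => Hq1 Ex.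
    case: Hy => p2 Hy; case: Hy => q2 Hy; case: Hy => Hp2 Hy; case: Hy => Hq2 Ey.
    rewrite Ex Ey.
    exists (vadd p1 p2), (vadd q1 q2); split; [exact: Uadd | split; [exact: Vadd | vext]].
  - move=> c x Hx; case: Hx => p Hx; case: Hx => q Hx; case: Hx => Hp Hx; case: Hx => Hq ->.
    exists (vscale c p), (vscale c q); split; [exact: Usc | split; [exact: Vsc | vext]].
have [k [E [HE [LE spanL]]]] := onb_exists _ sL.
have dec : forall j, {pq : vec n * vec n | U pq.1 /\ V pq.2 /\ E j = vadd pq.1 pq.2}.
  move=> j; apply: constructive_indefinite_description.
  have [p [q [Hp [Hq HE']]]] := LE j; by exists (p, q).
pose Pj := fun j => (proj1_sig (dec j)).1.
pose Qj := fun j => (proj1_sig (dec j)).2.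
have HPQ : forall j, U (Pj j) /\ V (Qj j) /\ E j = vadd (Pj j) (Qj j).
  move=> j; exact: proj2_sig (dec j).
clearbody Pj Qj.
have Hs : 0 <= \big[Rplus/0]_(j < k) (vnorm (Pj j) + vnorm (Qj j)).
  apply: sum_ge0 => j _; have := vnorm_ge0 (Pj j); have := vnorm_ge0 (Qj j); lra.
pose K := 1 + \big[Rplus/0]_(j < k) (vnorm (Pj j) + vnorm (Qj j)).
have HK1 : 1 <= K by rewrite /K; lra.
have decL : forall l, L l -> exists p q, U p /\ V q /\ l = vadd p q /\
    vnorm p <= K * vnorm l /\ vnorm q <= K * vnorm l.
  move=> l Ll.
  pose c := fun j => inner l (E j).
  have hc : forall j, Rabs (c j) <= vnorm l.
    move=> j; rewrite /c; have := cauchy_schwarz_abs l (E j); rewrite vnorm_onb //; lra.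
  exists (lc c Pj), (lc c Qj); split.
    apply: (@subspace_lc _ U _ c Pj sU) => j; by case: (HPQ j).
  split.
    apply: (@subspace_lc _ V _ c Qj sV) => j; by case: (HPQ j) => _ [].
  have nl := vnorm_ge0 l.
  split.
    rewrite {1}(spanL l Ll) /pE -/c; apply: functional_extensionality => i.
    rewrite /lc /vadd sumD; apply: eq_bigr => j _.
    case: (HPQ j) => _ [_ ->]; rewrite /vadd; ring.
  have bnd : forall F : 'I_k -> vec n, (forall j, vnorm (F j) <= vnorm (Pj j) + vnorm (Qj j)) ->
      vnorm (lc c F) <= K * vnorm l.
    move=> F HF; apply: (Rle_trans _ _ _ (norm_lc _ c F)).
    apply: (Rle_trans _ (vnorm l * \big[Rplus/0]_(j < k) (vnorm (Pj j) + vnorm (Qj j)))).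
      rewrite sumZ; apply: sum_le => j _; have := hc j; have := HF j; have := Rabs_pos (c j);
        have := vnorm_ge0 (F j); nra.
    rewrite /K; nra.
  split; apply: bnd => j; [have := vnorm_ge0 (Qj j) | have := vnorm_ge0 (Pj j)]; lra.
clearbody K.
have HK0 : 0 < K by lra.
set M0 := rho + vnorm z.
have HM0 : 0 <= M0 by rewrite /M0; have := vnorm_ge0 z; lra.
have EM0 : M0 = rho + vnorm z by [].
clearbody M0.
exists ((K + K * (3 * M0) / e) + K * ((3 * M0) / e + 1)); split.
  have : 0 <= 3 * M0 / e by rewrite /Rdiv; apply: Rmult_le_pos; [lra | apply: Rlt_le; apply: Rinv_0_lt_compat].
  move=> ?.
  nra.
move=> x Hx.
have hxz : vnorm (vsub x z) <= M0.
  apply: (Rle_trans _ _ _ (vnorm_sub _ _)); lra.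
have [a0 Ha0] := proj_exists _ x hAcl hAcv hAne.
have Ea : proj A x = a0 := proj_eq _ _ _ hAcv Ha0.
set r := refl A x.
have Er : r = vsub (vscale 2 a0) x by rewrite /r /refl Ea.
have [b0 Hb0] := proj_exists _ r hBcl hBcv hBne.
have Eb : proj B r = b0 := proj_eq _ _ _ hBcv Hb0.
have EDR : vsub x (DR A B x) = vsub a0 b0.
  by rewrite /DR -/r Ea Eb; vext.
rewrite EDR; clear Ea Eb EDR.
clearbody r; subst r.
rename a0 into a; rename b0 into b.
pose u := vsub x a.
have Exu : x = vadd a u by rewrite /u; vext.
clearbody u; subst x.
rewrite (_ : vsub (vscale 2 a) (vadd a u) = vsub a u) in Hb0; last by vext.
pose d := vsub a b.
have Ebd : b = vsub a d by rewrite /d; vext.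
clearbody d; subst b.
have varA : forall y, A y -> inner u (vsub y a) <= 0.
  move=> y Ay; have := proj_var _ _ _ hAcv Ha0 _ Ay.
  by have -> : vsub (vadd a u) a = u by vext.
have varB : forall y, B y -> inner (vsub d u) (vsub y (vsub a d)) <= 0.
  move=> y By; have := proj_var _ _ _ hBcv Hb0 _ By.
  by have -> : vsub (vsub a u) (vsub a d) = vsub d u by vext.
have Aa := proj1 Ha0.
have Bb := proj1 Hb0.
have hu : vnorm u <= M0.
  have := proj2 Ha0 z Az; have -> : vsub (vadd a u) a = u by vext.
  lra.
have haz : vnorm (vsub a z) <= M0.
  have := proj_le _ _ _ _ Ha0 hAcv Az; lra.
have hbz : vnorm (vsub (vsub a d) z) <= 2 * M0.
  have := proj_le _ _ _ _ Hb0 hBcv Bz.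
  have -> : vsub (vsub a u) z = vsub (vsub a z) u by vext.
  have := vnorm_sub (vsub a z) u; lra.
have hd := vnorm_ge0 d.
have dL : L d.
  exists (vsub a z), (vscale (-1) (vsub (vsub a d) z)); split; first exact: AU.
  split; first by apply: Vsc; apply: BV.
  vext.
have [c [Ac [Bc hc]]] : exists c, A c /\ B c /\
    vnorm (vsub c a) <= (K + K * (3 * M0) / e) * vnorm d.
  case: (Req_dec (vnorm d) 0) => hd0.
    have d0 : d = @vzero n := vnorm_eq0 _ hd0.
    exists a; split => //; split.
      by have <- : vsub a d = a by rewrite d0; vext.
    have -> : vsub a a = @vzero n by vext.
    rewrite vnorm_zero hd0; lra.
  have hdp : 0 < vnorm d by lra.
  have [P [Q [UP [VQ [EdPQ [nP nQ]]]]]] := decL d dL.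
  pose lam := K * vnorm d / e.
  have hlam : 0 < lam by rewrite /lam; apply: Rdiv_lt_0_compat => //; nra.
  have Elam : lam * e = K * vnorm d by rewrite /lam; field; lra.
  clearbody lam.
  pose mu := / (1 + lam).
  have hmu : 0 < mu by rewrite /mu; apply: Rinv_0_lt_compat; lra.
  have hmu1 : mu * (1 + lam) = 1 by rewrite /mu; field; lra.
  have Emu : mu = / (1 + lam) by [].
  clearbody mu.
  exists (vadd (vscale mu (vsub a P)) (vscale (1 - mu) z)).
  split.
    have HsA : U (vscale (- / lam) P) by apply: Usc.
    have nsA : vnorm (vscale (- / lam) P) <= e.
      rewrite vnorm_scale Rabs_Ropp Rabs_pos_eq; last by apply: Rlt_le; apply: Rinv_0_lt_compat.
      apply: (Rmult_le_reg_l lam) => //; rewrite -Rmult_assoc Rinv_r; lra.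
    have AzA := inU _ HsA nsA.
    have := hAcv _ _ (1 - mu) AzA Aa ltac:(split; nra).
    have -> : vadd (vscale (1 - mu) (vadd z (vscale (- / lam) P))) (vscale (1 - (1 - mu)) a)
      = vadd (vscale mu (vsub a P)) (vscale (1 - mu) z); last done.
    rewrite Emu; vext; lra.
  split.
    have HsB : V (vscale (/ lam) Q) by apply: Vsc.
    have nsB : vnorm (vscale (/ lam) Q) <= e.
      rewrite vnorm_scale Rabs_pos_eq; last by apply: Rlt_le; apply: Rinv_0_lt_compat.
      apply: (Rmult_le_reg_l lam) => //; rewrite -Rmult_assoc Rinv_r; lra.
    have BzB := inV _ HsB nsB.
    have := hBcv _ _ (1 - mu) BzB Bb ltac:(split; nra).
    have -> : vadd (vscale (1 - mu) (vadd z (vscale (/ lam) Q))) (vscale (1 - (1 - mu)) (vsub a d))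
      = vadd (vscale mu (vsub a P)) (vscale (1 - mu) z); last done.
    apply: functional_extensionality => i.
    have := f_equal (fun f => f i) EdPQ; rewrite /vadd /vsub /vscale /= => ->.
    rewrite Emu; field; lra.
  have -> : vsub (vadd (vscale mu (vsub a P)) (vscale (1 - mu) z)) a
    = vadd (vscale (- mu) P) (vscale (1 - mu) (vsub z a)) by vext.
  apply: (Rle_trans _ _ _ (vnorm_add _ _)).
  rewrite !vnorm_scale Rabs_Ropp (Rabs_pos_eq mu); last lra.
  have hmu' : mu <= 1 by nra.
  rewrite Rabs_pos_eq; last lra.
  rewrite vnorm_sym.
  have hP0 := vnorm_ge0 P.
  have h1 : mu * vnorm P <= K * vnorm d by nra.
  have h2 : (1 - mu) * vnorm (vsub a z) <= lam * M0.
    have : 1 - mu = lam * mu by nra.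
    move=> ->; have hX := vnorm_ge0 (vsub a z); have hY : mu * vnorm (vsub a z) <= M0 by nra.
    rewrite Rmult_assoc; apply: Rmult_le_compat_l; lra.
  have h3 : lam * M0 <= K * (3 * M0) / e * vnorm d.
    have : lam = K * vnorm d / e by apply: (Rmult_eq_reg_r e); [rewrite Elam; field|]; lra.
    move=> ->; rewrite /Rdiv.
    have hie : 0 < / e by apply: Rinv_0_lt_compat.
    have : 0 <= K * vnorm d * / e by apply: Rmult_le_pos; [nra | lra].
    nra.
  nra.
pose g := pE E u.
have gL : L g := subspace_lc _ _ (fun j => inner u (E j)) E sL LE.
have perp : forall l, L l -> inner (vsub u g) l = 0.
  move=> l Ll; rewrite inner_subl.
  have -> : inner u l = inner (pE E l) u by rewrite inner_sym -(spanL l Ll).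
  rewrite /g /pE !inner_lc.
  have -> : \big[Rplus/0]_(j < k) (inner l (E j) * inner (E j) u)
    = \big[Rplus/0]_(j < k) (inner u (E j) * inner (E j) l).
    apply: eq_bigr => j _; rewrite (inner_sym l) (inner_sym (E j) u); ring.
  ring.
clearbody g.
have gg : inner g g = inner u g.
  have := perp g gL; rewrite inner_subl; lra.
have hg : vnorm g <= K * (3 * M0 / e + 1) * vnorm d.
  have hie : 0 < / e by apply: Rinv_0_lt_compat.
  have h3e : 0 <= 3 * M0 / e by rewrite /Rdiv; apply: Rmult_le_pos; lra.
  case: (Req_dec (vnorm g) 0) => hg0.
    rewrite hg0; have : 0 <= K * (3 * M0 / e + 1) by nra.
    move=> H; apply: Rmult_le_pos; lra.
  have hgp : 0 < vnorm g by have := vnorm_ge0 g; lra.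
  have [p [q [Up [Vq [Egpq [np nq]]]]]] := decL g gL.
  pose N := K * vnorm g.
  have hN : 0 < N by rewrite /N; nra.
  have EN : N = K * vnorm g by [].
  clearbody N.
  have bU : forall s, U s -> vnorm s <= N -> inner u s <= N / e * inner u (vsub a z).
    move=> s Us Hs0.
    have Us' : U (vscale (e / N) s) by apply: Usc.
    have ns' : vnorm (vscale (e / N) s) <= e.
      rewrite vnorm_scale Rabs_pos_eq; last by apply: Rlt_le; apply: Rdiv_lt_0_compat.
      apply: (Rmult_le_reg_l (N / e)); first by apply: Rdiv_lt_0_compat.
      rewrite -Rmult_assoc (_ : N / e * (e / N) = 1); last by field; lra.
      rewrite (_ : N / e * e = N); last by field; lra.
      lra.
    have := varA _ (inU _ Us' ns').
    have -> : vsub (vadd z (vscale (e / N) s)) a = vsub (vscale (e / N) s) (vsub a z) by vext.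
    rewrite inner_subr inner_scaler => H.
    have -> : inner u s = N / e * (e / N * inner u s) by field; lra.
    apply: Rmult_le_compat_l; [apply: Rlt_le; apply: Rdiv_lt_0_compat|]; lra.
  have bV : forall s, V s -> vnorm s <= N ->
      inner (vsub d u) s <= N / e * inner (vsub d u) (vsub (vsub a d) z).
    move=> s Vs Hs0.
    have Vs' : V (vscale (e / N) s) by apply: Vsc.
    have ns' : vnorm (vscale (e / N) s) <= e.
      rewrite vnorm_scale Rabs_pos_eq; last by apply: Rlt_le; apply: Rdiv_lt_0_compat.
      apply: (Rmult_le_reg_l (N / e)); first by apply: Rdiv_lt_0_compat.
      rewrite -Rmult_assoc (_ : N / e * (e / N) = 1); last by field; lra.
      rewrite (_ : N / e * e = N); last by field; lra.
      lra.
    have := varB _ (inV _ Vs' ns').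
    have -> : vsub (vadd z (vscale (e / N) s)) (vsub a d)
      = vsub (vscale (e / N) s) (vsub (vsub a d) z) by vext.
    rewrite inner_subr inner_scaler => H.
    have -> : inner (vsub d u) s = N / e * (e / N * inner (vsub d u) s) by field; lra.
    apply: Rmult_le_compat_l; [apply: Rlt_le; apply: Rdiv_lt_0_compat|]; lra.
  have uaz : 0 <= inner u (vsub a z).
    have := varA z Az; have -> : vsub z a = vscale (-1) (vsub a z) by vext.
    rewrite inner_scaler; lra.
  have vbz : 0 <= inner (vsub d u) (vsub (vsub a d) z).
    have := varB z Bz; have -> : vsub z (vsub a d) = vscale (-1) (vsub (vsub a d) z) by vext.
    rewrite inner_scaler; lra.
  have Ssum : inner u (vsub a z) + inner (vsub d u) (vsub (vsub a d) z) <= 3 * M0 * vnorm d.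
    have -> : inner u (vsub a z) + inner (vsub d u) (vsub (vsub a d) z)
      = inner u d + inner d (vsub (vsub a d) z) by inner_id.
    have c1 := cauchy_schwarz u d; have c2 := cauchy_schwarz d (vsub (vsub a d) z).
    have := vnorm_ge0 u; nra.
  have hp := bU p Up (ltac:(rewrite EN; lra)).
  have Vq' : V (vscale (-1) q) by apply: Vsc.
  have nq' : vnorm (vscale (-1) q) <= N.
    rewrite vnorm_scale Rabs_Ropp Rabs_R1 EN; lra.
  have hq := bV _ Vq' nq'.
  rewrite inner_scaler in hq.
  have Eug : inner u g = inner u p + (inner d q - inner (vsub d u) q).
    rewrite Egpq inner_addr inner_subl; ring.
  have cq := cauchy_schwarz d q.
  have hq0 := vnorm_ge0 q.
  have key : vnorm g * vnorm g <= vnorm g * (K * (3 * M0 / e + 1) * vnorm d).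
    rewrite vnorm_sq gg Eug.
    have : inner d q <= vnorm d * N by rewrite EN; nra.
    have : N / e * inner u (vsub a z) + N / e * inner (vsub d u) (vsub (vsub a d) z)
      <= N / e * (3 * M0 * vnorm d).
      rewrite -Rmult_plus_distr_l; apply: Rmult_le_compat_l => //.
      apply: Rlt_le; apply: Rdiv_lt_0_compat; lra.
    have -> : N / e * (3 * M0 * vnorm d) = N * (3 * M0 / e) * vnorm d by field; lra.
    rewrite EN; nra.
  apply: (Rmult_le_reg_l (vnorm g)) => //.
have LU : forall y, U y -> L y.
  by move=> y Uy; exists y, (@vzero n); split => //; split => //; vext.
have LV : forall y, V y -> L y.
  by move=> y Vy; exists (@vzero n), y; split => //; split => //; vext.
have wA : forall y, A y -> inner (vsub u g) (vsub y c) = 0.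
  move=> y Ay; apply: perp; apply: LU.
  have -> : vsub y c = vadd (vsub y z) (vscale (-1) (vsub c z)) by vext.
  apply: Uadd; [exact: AU | apply: Usc; exact: AU].
have wB : forall y, B y -> inner (vsub u g) (vsub y c) = 0.
  move=> y By; apply: perp; apply: LV.
  have -> : vsub y c = vadd (vsub y z) (vscale (-1) (vsub c z)) by vext.
  apply: Vadd; [exact: BV | apply: Vsc; exact: BV].
pose f := vadd c (vsub u g).
have Pf : proj A f = c.
  apply: proj_eq => //; apply: var_proj => // y Ay.
  have -> : vsub f c = vsub u g by rewrite /f; vext.
  rewrite wA //; lra.
have Ff : Fix (DR A B) f.
  rewrite /Fix /DR /refl Pf.
  have Pf2 : proj B (vsub (vscale 2 c) f) = c.
    apply: proj_eq => //; apply: var_proj => // y By.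
    have -> : vsub (vsub (vscale 2 c) f) c = vscale (-1) (vsub u g) by rewrite /f; vext.
    rewrite inner_scalel wB //; lra.
  rewrite Pf2; vext.
apply: (Rle_trans _ _ _ (dist_le _ _ _ Ff)).
have -> : vsub (vadd a u) f = vadd (vsub a c) g by rewrite /f; vext.
apply: (Rle_trans _ _ _ (vnorm_add _ _)).
rewrite vnorm_sym (_ : vsub a (vsub a d) = d); last by vext.
lra.
Qed.
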